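(* Let $n\ge 4$, $s_k=\sin(k\pi/n)$, and let $D_1,\dots,D_{n-1}$ be positive numbers satisfying $D_kD_{l-j}\ge D_jD_{l-k}+D_lD_{k-j}$ for all integers $1\le j<k<l\le n-1$, together with $D_1=D_{n-1}=s_1$. Let $a_k=\log(D_k/s_k)$. Then $a_1=a_{n-1}=0$, and for every $k\in\{2,\dots,n-2\}$ the number $q_k=s_{k+1}s_{k-1}/s_k^2$ satisfies $0<q_k<1$ and $$a_k\ \ge\ q_k\,\frac{a_{k+1}+a_{k-1}}{2}.$$ *)

(* Defs.v *)
From Stdlib Require Import Reals Lra Lia.
Open Scope R_scope.

Definition s (n k : nat) : R := sin (INR k * PI / INR n).

Definition a (n : nat) (D : nat -> R) (k : nat) : R := ln (D k / s n k).

Definition q (n k : nat) : R := s n (k + 1) * s n (k - 1) / (s n k ^ 2).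

(* Main.v *)
Require Import Defs.
From Stdlib Require Import Reals Lra Lia.
Open Scope R_scope.

Lemma ln_le' x y : 0 < x -> x <= y -> ln x <= ln y.
Proof.
  intros Hx Hxy. destruct (Rle_lt_or_eq_dec _ _ Hxy) as [H|H].
  - left; apply ln_increasing; auto.
  - subst; lra.
Qed.

Lemma concave_ln q y : 0 < q < 1 -> 0 < y -> q * ln y <= ln (1 - q + q * y).
Proof.
  intros Hq Hy.
  set (t := ln y).
  assert (Ey : y = exp t) by (unfold t; rewrite exp_ln; auto).
  assert (He : exp (q * t) <= 1 - q + q * y).
  { rewrite Ey.
    replace t with (q * t + (t - q * t)) at 2 by ring.
    rewrite exp_plus.
    assert (H1 := exp_ineq1_le (t - q * t)).
    assert (H2 := exp_ineq1_le (- (q * t))).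
    assert (E0 : 1 = exp (q * t) * exp (- (q*t))).
    { rewrite <- exp_plus. replace (q*t + - (q*t)) with 0 by ring. now rewrite exp_0. }
    assert (Hp := exp_pos (q * t)).
    rewrite E0 at 1.
    assert (exp (q*t) * (q * exp (t - q*t) + (1-q) * exp (-(q*t))) >= exp (q*t) * 1).
    { apply Rmult_ge_compat_l; [lra|]. nra. }
    nra. }
  replace (q * t) with (ln (exp (q * t))) by (rewrite ln_exp; reflexivity).
  apply ln_le'; auto. apply exp_pos.
Qed.

Lemma s_pos n k : (1 <= k)%nat -> (k < n)%nat -> 0 < s n k.
Proof.
  intros H1 H2. unfold s.
  assert (0 < INR k) by (apply lt_0_INR; lia).
  assert (INR k < INR n) by (apply lt_INR; lia).
  assert (0 < INR n) by lra.
  assert (PI > 0) by apply PI_RGT_0.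
  apply sin_gt_0.
  - apply Rdiv_lt_0_compat; nra.
  - apply Rmult_lt_reg_r with (INR n); auto.
    unfold Rdiv. rewrite Rmult_assoc, Rinv_l; nra.
Qed.

Lemma s_sym n : (1 <= n)%nat -> s n (n - 1) = s n 1.
Proof.
  intros Hn. unfold s. rewrite minus_INR by lia.
  assert (0 < INR n) by (apply lt_0_INR; lia).
  replace ((INR n - INR 1) * PI / INR n) with (PI - INR 1 * PI / INR n)
    by (field; lra).
  apply sin_PI_x.
Qed.

Lemma s_ident n k : (1 <= k)%nat -> (1 <= n)%nat ->
  s n k ^ 2 = s n 1 ^ 2 + s n (k + 1) * s n (k - 1).
Proof.
  intros Hk Hn. unfold s.
  assert (0 < INR n) by (apply lt_0_INR; lia).
  set (x := INR k * PI / INR n). set (h := PI / INR n).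
  replace (INR 1 * PI / INR n) with h by (unfold h; simpl; field; lra).
  replace (INR (k + 1) * PI / INR n) with (x + h)
    by (unfold x, h; rewrite plus_INR; simpl; field; lra).
  replace (INR (k - 1) * PI / INR n) with (x - h)
    by (unfold x, h; rewrite minus_INR by lia; simpl; field; lra).
  rewrite sin_plus, sin_minus.
  assert (A := sin2_cos2 x). assert (B := sin2_cos2 h).
  unfold Rsqr in *. nra.
Qed.

Theorem mainTheorem11 (n : nat) (D : nat -> R) :
  (4 <= n)%nat ->
  (forall k : nat, (1 <= k <= n - 1)%nat -> 0 < D k) ->
  (forall j k l : nat, (1 <= j)%nat -> (j < k)%nat -> (k < l)%nat -> (l <= n - 1)%nat ->
     D k * D (l - j)%nat >= D j * D (l - k)%nat + D l * D (k - j)%nat) ->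
  D 1%nat = s n 1 ->
  D (n - 1)%nat = s n 1 ->
  a n D 1 = 0 /\ a n D (n - 1) = 0 /\
  (forall k : nat, (2 <= k <= n - 2)%nat ->
     0 < q n k /\ q n k < 1 /\
     a n D k >= q n k * ((a n D (k + 1) + a n D (k - 1)) / 2)).
Proof.
  intros Hn Hpos HP HD1 HDn.
  assert (Hs1 : 0 < s n 1) by (apply s_pos; lia).
  split; [|split].
  - unfold a. rewrite HD1. replace (s n 1 / s n 1) with 1 by (field; lra). apply ln_1.
  - unfold a. rewrite HDn, s_sym by lia.
    replace (s n 1 / s n 1) with 1 by (field; lra). apply ln_1.
  - intros k Hk.
    assert (Hsk : 0 < s n k) by (apply s_pos; lia).
    assert (Hsp : 0 < s n (k+1)) by (apply s_pos; lia).
    assert (Hsm : 0 < s n (k-1)) by (apply s_pos; lia).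
    assert (HDk : 0 < D k) by (apply Hpos; lia).
    assert (HDp : 0 < D (k+1)%nat) by (apply Hpos; lia).
    assert (HDm : 0 < D (k-1)%nat) by (apply Hpos; lia).
    assert (Hid := s_ident n k ltac:(lia) ltac:(lia)).
    assert (HI := HP 1%nat k (k+1)%nat ltac:(lia) ltac:(lia) ltac:(lia) ltac:(lia)).
    replace (k + 1 - 1)%nat with k in HI by lia.
    replace (k + 1 - k)%nat with 1%nat in HI by lia.
    rewrite HD1 in HI.
    set (sk := s n k) in *. set (sp := s n (k+1)) in *. set (sm := s n (k-1)) in *.
    set (s1 := s n 1) in *.
    set (Dk := D k) in *. set (Dp := D (k+1)%nat) in *. set (Dm := D (k-1)%nat) in *.
    assert (Hq : q n k = sp * sm / sk ^ 2) by reflexivity.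
    assert (Hsk2 : 0 < sk ^ 2) by nra.
    assert (Hq0 : 0 < q n k) by (rewrite Hq; apply Rdiv_lt_0_compat; nra).
    assert (Hq1 : q n k < 1).
    { rewrite Hq. apply Rmult_lt_reg_r with (sk ^ 2); auto.
      unfold Rdiv. rewrite Rmult_assoc, Rinv_l by lra. nra. }
    split; [auto|split; [auto|]].
    set (qq := q n k) in *.
    set (y := (Dp / sp) * (Dm / sm)).
    assert (Hy : 0 < y) by (unfold y; apply Rmult_lt_0_compat; apply Rdiv_lt_0_compat; auto).
    assert (Hc := concave_ln qq y ltac:(lra) Hy).
    assert (Hx : 0 < Dk / sk) by (apply Rdiv_lt_0_compat; auto).
    assert (Hineq : 1 - qq + qq * y <= (Dk / sk) * (Dk / sk)).
    { rewrite Hq. unfold y.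
      replace (1 - sp * sm / sk ^ 2 + sp * sm / sk ^ 2 * (Dp / sp * (Dm / sm)))
        with ((sk^2 - sp*sm + Dp * Dm) / sk^2) by (field; lra).
      replace (Dk / sk * (Dk / sk)) with ((Dk * Dk) / sk^2) by (field; lra).
      unfold Rdiv. apply Rmult_le_compat_r.
      - left; apply Rinv_0_lt_compat; auto.
      - assert (sk^2 - sp*sm = s1*s1) by (rewrite Hid; ring). lra. }
    assert (Hqy : 0 < qq*y) by (apply Rmult_lt_0_compat; lra).
    assert (H1p : 0 < 1 - qq + qq*y) by lra.
    assert (Hl := ln_le' _ _ H1p Hineq).
    rewrite ln_mult in Hl by auto.
    unfold y in Hc. rewrite ln_mult in Hc by (apply Rdiv_lt_0_compat; auto).
    unfold a. fold Dk Dp Dm sk sp sm. replace (qq * ((ln (Dp / sp) + ln (Dm / sm)) / 2)) with (qq * (ln (Dp / sp) + ln (Dm / sm)) / 2) by field. change (ln (1 - qq + qq * (Dp / sp * (Dm / sm)))) with (ln (1-qq+qq*y)) in Hc. lra.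
Qed.
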